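(* Consider the three-link parallel network with unit demand and latencies $\ell_1(x_1)=x_1$, $\ell_2(x_2)=x_2$, $\ell_3(x_3)=\frac{x_3}{2}+\frac65$. Then every toll vector in the set $\left\{\left(t_1,\tfrac75-t_1,0\right)\ :\ \tfrac{24}{35}\le t_1\le\tfrac57\right\}$ is an uncapped subgame perfect Nash equilibrium; in particular $\mathcal{T}(\infty)$ contains infinitely many elements.
   Context: Flows $x\in\mathbb{R}^3_+$ with $x_1+x_2+x_3=1$. For tolls $t\in\mathbb{R}^3_+$, $x(t)$ is the unique Wardrop equilibrium for $t$ (for all $i,j$ with $x_i>0$: $\ell_i(x_i)+t_i\le\ell_j(x_j)+t_j$). Profit $\Pi_i(t)=t_ix_i(t)$. $\mathcal{T}(\infty)$: toll vectors $t\in\mathbb{R}^3_+$ such that for every $i$ and every $t'_i\ge0$, $\Pi_i(t_i,t_{-i})\ge\Pi_i(t'_i,t_{-i})$ (flow recomputed). Note that here the untolled Wardrop equilibrium does not have full support (link 3 is unused). *)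

(* Defs.v *)
From Stdlib Require Import Reals Lra List.
Open Scope R_scope.

(* Links are indexed 0,1,2 (paper's links 1,2,3). Flow and toll vectors are
   functions nat -> R, only indices < 3 matter. *)

Definition lat (i : nat) (y : R) : R :=
  match i with
  | O => y
  | S O => y
  | _ => y / 2 + 6 / 5
  end.

Definition vec3 (a b c : R) : nat -> R :=
  fun j => match j with O => a | S O => b | _ => c end.

Definition feasible (x : nat -> R) : Prop :=
  (forall i, (i < 3)%nat -> 0 <= x i) /\ x 0%nat + x 1%nat + x 2%nat = 1.

Definition wardrop (t x : nat -> R) : Prop :=
  feasible x /\
  forall i j, (i < 3)%nat -> (j < 3)%nat -> 0 < x i ->
    lat i (x i) + t i <= lat j (x j) + t j.

Definition nonneg_tolls (t : nat -> R) : Prop :=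
  forall i, (i < 3)%nat -> 0 <= t i.

Definition upd (t : nat -> R) (i : nat) (v : R) : nat -> R :=
  fun j => if Nat.eqb j i then v else t j.

(* Profit Pi_i(t) = t_i x_i(t) >= Pi_i(t') where x(.) is the (unique)
   Wardrop equilibrium: we require existence of the equilibria and compare
   profits for every equilibrium (uniqueness makes this the same as x(t)). *)
Definition profit_ge (i : nat) (t t' : nat -> R) : Prop :=
  (exists x, wardrop t x) /\ (exists x', wardrop t' x') /\
  forall x x', wardrop t x -> wardrop t' x' -> t' i * x' i <= t i * x i.

Definition in_T_infty (t : nat -> R) : Prop :=
  nonneg_tolls t /\
  forall i, (i < 3)%nat -> forall v, 0 <= v -> profit_ge i t (upd t i v).

(* Main.v *)
Require Import Defs.
From Stdlib Require Import Reals List.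
From Stdlib Require Import Lra Lia Psatz.
Open Scope R_scope.

Lemma wfacts t x : wardrop t x ->
  0 <= x 0%nat /\ 0 <= x 1%nat /\ 0 <= x 2%nat /\ x 0%nat + x 1%nat + x 2%nat = 1 /\
  (0 < x 0%nat -> x 0%nat + t 0%nat <= x 1%nat + t 1%nat /\
                  x 0%nat + t 0%nat <= x 2%nat / 2 + 6/5 + t 2%nat) /\
  (0 < x 1%nat -> x 1%nat + t 1%nat <= x 0%nat + t 0%nat /\
                  x 1%nat + t 1%nat <= x 2%nat / 2 + 6/5 + t 2%nat) /\
  (0 < x 2%nat -> x 2%nat / 2 + 6/5 + t 2%nat <= x 0%nat + t 0%nat /\
                  x 2%nat / 2 + 6/5 + t 2%nat <= x 1%nat + t 1%nat).
Proof.
  intros [[Hnn Hs] H].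
  pose proof (H 0%nat 1%nat) as H01. pose proof (H 0%nat 2%nat) as H02.
  pose proof (H 1%nat 0%nat) as H10. pose proof (H 1%nat 2%nat) as H12.
  pose proof (H 2%nat 0%nat) as H20. pose proof (H 2%nat 1%nat) as H21.
  simpl in *.
  repeat split; try (apply Hnn; lia); try lra;
  try (apply H01; auto; lia); try (apply H02; auto; lia);
  try (apply H10; auto; lia); try (apply H12; auto; lia);
  try (apply H20; auto; lia); try (apply H21; auto; lia).
Qed.

Ltac split_pos H :=
  destruct (Rle_lt_or_eq_dec _ _ H) as [?|?].

Ltac crunch Hw :=
  let a := fresh in let b := fresh in let c := fresh in let d := fresh in
  let e := fresh in let f := fresh in let g := fresh in
  destruct (wfacts _ _ Hw) as [a [b [c [d [e [f g]]]]]];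
  simpl in a, b, c, d, e, f, g;
  split_pos a; split_pos b; split_pos c;
  repeat match goal with
  | H : 0 < ?z, K : 0 < ?z -> _ |- _ => specialize (K H)
  end.

Ltac wtac :=
  unfold wardrop, feasible; split; [split; [let i := fresh "i" in intros i ?; destruct i as [|[|[|i]]]; simpl; lra || lia | simpl; lra] |];
  let i := fresh "i" in let j := fresh "j" in
  intros i j ? ?; destruct i as [|[|[|i]]]; try lia; destruct j as [|[|[|j]]]; try lia; simpl; intros; lra.

Lemma base_unique t1 x : 24/35 <= t1 <= 5/7 -> wardrop (vec3 t1 (7/5 - t1) 0) x ->
  x 0%nat = 6/5 - t1 /\ x 1%nat = t1 - 1/5 /\ x 2%nat = 0.
Proof.
  intros Ht Hw. crunch Hw; simpl in *; lra.
Qed.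

Lemma base_exists t1 : 24/35 <= t1 <= 5/7 -> wardrop (vec3 t1 (7/5 - t1) 0) (vec3 (6/5 - t1) (t1 - 1/5) 0).
Proof. intros Ht. wtac. Qed.

Lemma in_T t1 : 24/35 <= t1 <= 5/7 -> in_T_infty (vec3 t1 (7/5 - t1) 0).
Proof.
  intros Ht. split.
  { intros i Hi; destruct i as [|[|[|i]]]; simpl; lra || lia. }
  intros i Hi v Hv. split; [exists (vec3 (6/5 - t1) (t1 - 1/5) 0); apply base_exists; auto|].
  destruct i as [|[|[|i]]]; try lia.
  - split.
    + destruct (Rle_dec v t1).
      * exists (vec3 ((12/5 - t1 - v)/2) ((t1 - 2/5 + v)/2) 0). unfold upd. wtac.
      * destruct (Rle_dec v ((24/5 - t1)/3)).
        -- exists (vec3 ((24/5 - t1 - 3*v)/4) ((3*t1 - 4/5 + v)/4) ((v - t1)/2)).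
           unfold upd; wtac.
        -- exists (vec3 0 ((2*t1 + 3/5)/3) ((12/5 - 2*t1)/3)). unfold upd. wtac.
    + intros x x' Hx Hx'. destruct (base_unique _ _ Ht Hx) as [E0 [E1 E2]].
      rewrite E0. unfold upd in Hx'. unfold upd, vec3 in *. crunch Hx'; simpl in *; try lra;
      first [ match goal with H: 0 = x' 0%nat |- _ => rewrite <- H; nra end
                 | assert (Ex: x' 0%nat = (24/5 - t1 - 3*v)/4) by lra; assert (t1 <= v) by lra; rewrite Ex; nra
                 | assert (Ex: x' 0%nat = (12/5 - t1 - v)/2) by lra; assert (v <= t1) by lra; rewrite Ex; nra ].
  - split.
    + destruct (Rle_dec v (7/5 - t1)).
      * exists (vec3 ((1 - t1 + v)/2) ((1 + t1 - v)/2) 0). unfold upd. wtac.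
      * destruct (Rle_dec v ((17/5 + t1)/3)).
        -- exists (vec3 ((17/5 + v - 3*t1)/4) ((17/5 + t1 - 3*v)/4) ((v + t1 - 7/5)/2)).
           unfold upd; wtac.
        -- exists (vec3 ((17/5 - 2*t1)/3) 0 ((2*t1 - 2/5)/3)). unfold upd. wtac.
    + intros x x' Hx Hx'. destruct (base_unique _ _ Ht Hx) as [E0 [E1 E2]].
      rewrite E1. unfold upd, vec3 in *. crunch Hx'; simpl in *; try lra;
      first [ match goal with H: 0 = x' 1%nat |- _ => rewrite <- H; nra end
                 | assert (Ex: x' 1%nat = (17/5 + t1 - 3*v)/4) by lra; assert (7/5 - t1 <= v) by lra; rewrite Ex; nra
                 | assert (Ex: x' 1%nat = (1 + t1 - v)/2) by lra; assert (v <= 7/5 - t1) by lra; rewrite Ex; nra ].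
  - split.
    + exists (vec3 (6/5 - t1) (t1 - 1/5) 0). unfold upd. wtac.
    + intros x x' Hx Hx'. destruct (base_unique _ _ Ht Hx) as [E0 [E1 E2]].
      rewrite E2. unfold upd, vec3 in *. crunch Hx'; simpl in *; try lra;
      match goal with H: 0 = x' 2%nat |- _ => rewrite <- H; nra end.
Qed.

Lemma avoid (L : list R) : forall a b, a < b -> exists y, a < y < b /\ ~ In y L.
Proof.
  induction L as [|h L IH]; intros a b Hab.
  - exists ((a+b)/2). split; [lra | simpl; auto].
  - destruct (Rle_dec h ((a+b)/2)).
    + destruct (IH ((a+b)/2) b) as [y [Hy Hn]]; [lra|].
      exists y. split; [lra|]. simpl. intros [E|E]; [lra|auto].
    + destruct (IH a ((a+b)/2)) as [y [Hy Hn]]; [lra|].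
      exists y. split; [lra|]. simpl. intros [E|E]; [lra|auto].
Qed.

Theorem mainTheorem13 :
  (forall t1 : R, 24 / 35 <= t1 <= 5 / 7 ->
     in_T_infty (vec3 t1 (7 / 5 - t1) 0)) /\
  ~ (exists l : list (nat -> R), forall t, in_T_infty t -> In t l).
Proof.
  split; [exact in_T|].
  intros [l Hl].
  destruct (avoid (map (fun t => t 0%nat) l) (24/35) (5/7)) as [y [Hy Hn]]; [lra|].
  apply Hn. apply (in_map (fun t => t 0%nat) l (vec3 y (7/5 - y) 0)).
  apply Hl. apply in_T. lra.
Qed.
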